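(* Let $e_1,\dots,e_p$ be unit vectors in $\mathbb{C}^m$ and $f_1,\dots,f_p$ unit vectors in $\mathbb{C}^n$ such that $[e_i]\neq[e_j]$ for $i\neq j$ and $f_1,\dots,f_p$ are linearly independent. If $\lambda_1,\dots,\lambda_p$ are nonnegative numbers with sum $1$, then the separable state $\omega=\sum_i\lambda_i\omega_{e_i\otimes f_i}$ has a unique representation as a convex combination of pure product states.
   Context: States are on $\mathcal{B}(\mathbb{C}^m\otimes\mathbb{C}^n)$; $\omega_z(A)=(Az,z)$ for a unit vector $z$; a pure product state is a state $\omega_{x\otimes y}$ with $x\in\mathbb{C}^m$, $y\in\mathbb{C}^n$ unit vectors. $[x]$ is the line spanned by $x$. Uniqueness means: any two expressions of $\omega$ as convex combinations of pure product states (with positive weights, combining equal terms) coincide. *)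

(* Defs.v *)
From HB Require Import structures.
From mathcomp Require Import all_boot all_order all_algebra.
Set Implicit Arguments. Unset Strict Implicit. Unset Printing Implicit Defensive.
Import Order.TTheory GRing.Theory Num.Theory.
Local Open Scope ring_scope.

(* C is an arbitrary numeric algebraically closed field (e.g. the complex
   numbers); vectors of C^m are row vectors 'rV[C]_m; operators on
   C^m (x) C^n are matrices 'M[C]_(m*n), the tensor factor indices being
   combined via mxvec_index. *)

Definition cvec (C : numClosedFieldType) (k : nat) (z : 'rV[C]_k) : 'rV[C]_k :=
  map_mx Num.conj z.

Definition unit_vec (C : numClosedFieldType) (k : nat) (z : 'rV[C]_k) : Prop :=
  (z *m (cvec z)^T) 0 0 = 1.

Definition vstate (C : numClosedFieldType) (k : nat) (z : 'rV[C]_k)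
  (A : 'M[C]_k) : C :=
  (cvec z *m A *m z^T) 0 0.

(* x (tensor) y in C^m (x) C^n = C^(m*n); entry (mxvec_index i j) is x_i y_j *)
Definition tens (C : numClosedFieldType) (m n : nat)
  (x : 'rV[C]_m) (y : 'rV[C]_n) : 'rV[C]_(m * n) :=
  mxvec (x^T *m y).

Definition pstate (C : numClosedFieldType) (m n : nat)
  (x : 'rV[C]_m) (y : 'rV[C]_n) : 'M[C]_(m * n) -> C :=
  vstate (tens x y).

Definition product_decomposition (C : numClosedFieldType) (m n : nat)
  (w : 'M[C]_(m * n) -> C) (k : nat)
  (mu : 'I_k -> C) (x : 'I_k -> 'rV[C]_m) (y : 'I_k -> 'rV[C]_n) : Prop :=
  (forall j, 0 < mu j) /\
  (\sum_(j < k) mu j = 1) /\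
  (forall j, unit_vec (x j) /\ unit_vec (y j)) /\
  (forall j1 j2, j1 != j2 ->
     ~ (forall A, pstate (x j1) (y j1) A = pstate (x j2) (y j2) A)) /\
  (forall A, w A = \sum_(j < k) mu j * pstate (x j) (y j) A).

(* Main.v *)
Require Import Defs.
From HB Require Import structures.
From mathcomp Require Import all_boot all_order all_algebra.
Set Implicit Arguments. Unset Strict Implicit. Unset Printing Implicit Defensive.
Import Order.TTheory GRing.Theory Num.Theory.
Local Open Scope ring_scope.

Section H.
Variable C : numClosedFieldType.

Lemma mx11E (k : nat) (a : 'M[C]_(1,k)) (b : 'M[C]_(k,1)) (c : 'M[C]_(1,1)) :
  (a *m b *m c) 0 0 = (a *m b) 0 0 * c 0 0.
Proof. by rewrite [in LHS]mxE big_ord1. Qed.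

Lemma vstate_rank1 k (z v : 'rV[C]_k) :
  vstate z ((cvec v)^T *m v) = ((z *m v^T) 0 0)^* * (z *m v^T) 0 0.
Proof.
rewrite /vstate /cvec mulmxA.
rewrite -mulmxA mx11E.
have -> : v *m z^T = (z *m v^T)^T by rewrite trmx_mul trmxK.
rewrite [(_ ^T) 0 0]mxE; congr (_ * _).
by rewrite !mxE rmorph_sum; apply: eq_bigr => i _; rewrite !mxE rmorphM.
Qed.

Lemma vstate_scale k (c : C) (z : 'rV[C]_k) A :
  vstate (c *: z) A = c^* * c * vstate z A.
Proof.
rewrite /vstate /cvec.
have -> : map_mx Num.conj (c *: z) = c^* *: (map_mx Num.conj z) by apply/rowP => i; rewrite !mxE rmorphM.
have -> : (c *: z)^T = c *: z^T by apply/matrixP => i j; rewrite !mxE.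
rewrite -!scalemxAl -scalemxAr !mxE.
by rewrite mulrA.
Qed.

Lemma tens_dot m n (x a : 'rV[C]_m) (y b : 'rV[C]_n) :
  (tens x y *m (tens a b)^T) 0 0 = (x *m a^T) 0 0 * (y *m b^T) 0 0.
Proof.
rewrite /tens mxvec_dotmul mulmxA -mulmxA [LHS]mxE big_ord1.
have -> : b *m y^T = (y *m b^T)^T by rewrite trmx_mul trmxK.
by rewrite [(_^T) 0 0]mxE.
Qed.

Lemma cvec_tens m n (x : 'rV[C]_m) (y : 'rV[C]_n) :
  cvec (tens x y) = tens (cvec x) (cvec y).
Proof. by rewrite /cvec /tens map_mxvec map_mxM map_trmx. Qed.

Lemma unit_tens m n (x : 'rV[C]_m) (y : 'rV[C]_n) :
  unit_vec x -> unit_vec y -> unit_vec (tens x y).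
Proof. by rewrite /unit_vec cvec_tens tens_dot => -> ->; rewrite mulr1. Qed.

Lemma vstate1 k (z : 'rV[C]_k) : vstate z 1%:M = (z *m (cvec z)^T) 0 0.
Proof.
rewrite /vstate mulmx1.
have -> : (cvec z *m z^T) = (z *m (cvec z)^T)^T by rewrite trmx_mul trmxK.
by rewrite mxE.
Qed.

Lemma tensE m n (x : 'rV[C]_m) (y : 'rV[C]_n) a b :
  tens x y 0 (mxvec_index a b) = x 0 a * y 0 b.
Proof. by rewrite /tens mxvecE mxE big_ord1 !mxE. Qed.

Lemma unit_nz k (x : 'rV[C]_k) : unit_vec x -> exists a, x 0 a != 0.
Proof.
move=> u; apply/existsP; apply: contraLR isT => /existsPn H.
have x0 : x = 0 by apply/rowP => a; rewrite mxE; apply/eqP; move: (H a); rewrite negbK.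
by move: u; rewrite /unit_vec x0 mul0mx mxE => /eqP; rewrite eq_sym oner_eq0.
Qed.


Section Main.
Variables (m n p : nat) (e : 'I_p -> 'rV[C]_m) (f : 'I_p -> 'rV[C]_n)
  (lambda : 'I_p -> C) (G : 'M[C]_(n, p)).
Hypothesis He : forall i, unit_vec (e i).
Hypothesis Hf : forall i, unit_vec (f i).
Hypothesis Hdist : forall i j, i != j -> ~~ (e i == e j)%MS.
Hypothesis HG : (\matrix_(i < p) f i) *m G = 1%:M.

Definition wv i := tens (cvec (e i)) (col i G)^T.
Definition Aw i := (cvec (wv i))^T *m wv i.

Lemma fG k i : (f k *m col i G) 0 0 = (k == i)%:R.
Proof.
have := congr1 (fun M : 'M[C]_p => M k i) HG; rewrite !mxE => <-.
by apply: eq_bigr => b _; rewrite !mxE.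
Qed.

Lemma pst_Aw k i : pstate (e k) (f k) (Aw i) = (k == i)%:R.
Proof.
rewrite /pstate /Aw vstate_rank1 /wv tens_dot trmxK fG.
case: eqP => [->|_]; last by rewrite /= mulr0 mulr0.
by rewrite He mulr1 rmorph1 mulr1.
Qed.

Lemma w_Aw i : \sum_(l < p) lambda l * pstate (e l) (f l) (Aw i) = lambda i.
Proof.
rewrite (bigD1 i) //= big1 => [|l /negbTE H]; last by rewrite pst_Aw H mulr0.
by rewrite pst_Aw eqxx mulr1 addr0.
Qed.


Section Dec.
Variables (k : nat) (mu : 'I_k -> C) (x : 'I_k -> 'rV[C]_m) (y : 'I_k -> 'rV[C]_n).
Hypothesis D : product_decomposition
  (fun A => \sum_(i < p) lambda i * pstate (e i) (f i) A) mu x y.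

Lemma range j : exists i, forall A, pstate (x j) (y j) A = pstate (e i) (f i) A.
Proof.
have [Hmu [_ [Hxy [_ Hw]]]] := D.
set T := \matrix_(i < p) tens (e i) (f i).
set s := tens (x j) (y j).
have Hsub : (s <= T)%MS.
  rewrite submxE; apply/eqP/rowP => c.
  set v := (col c (cokermx T))^T.
  have Hv : forall i, (tens (e i) (f i) *m v^T) 0 0 = 0.
    move=> i; have := congr1 (fun M : 'M[C]_(p, m * n) => M i c) (mulmx_coker T).
    rewrite !mxE => H; rewrite -[RHS]H.
    apply: eq_bigr => b _; by rewrite !mxE.
  have := Hw ((cvec v)^T *m v).
  rewrite big1 => [|i _]; last by rewrite /pstate vstate_rank1 Hv rmorph0 mulr0 mulr0.
  move=> /esym H0.
  have Hge : forall j, true -> 0 <= mu j * pstate (x j) (y j) ((cvec v)^T *m v).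
    move=> j' _; rewrite /pstate vstate_rank1; apply: mulr_ge0; first exact: ltW.
    by rewrite mulrC mul_conjC_ge0.
  have /eqP := @psumr_eq0P _ _ _ _ Hge H0 j isT.
  rewrite mulf_eq0 (gt_eqF (Hmu j)) /= /pstate vstate_rank1 mulrC mul_conjC_eq0 => /eqP Hd.
  rewrite [RHS]mxE; apply: etrans _ Hd; rewrite !mxE; apply: eq_bigr => b _; by rewrite !mxE.
have [cc Hs] := submxP Hsub.
have [ux uy] := Hxy j.
have Hent : forall a b, x j 0 a * y j 0 b = \sum_i cc 0 i * (e i 0 a * f i 0 b).
  move=> a b; rewrite -tensE -/s Hs mxE; apply: eq_bigr => i _; by rewrite mxE tensE.
have Hkey : forall a l, x j 0 a * (y j *m col l G) 0 0 = cc 0 l * e l 0 a.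
  move=> a l; rewrite mxE mulr_sumr.
  under eq_bigr => b _ do rewrite mxE mulrA Hent mulr_suml.
  transitivity (\sum_i cc 0 i * e i 0 a * (f i *m col l G) 0 0).
    rewrite exchange_big; apply: eq_bigr => i _; rewrite mxE mulr_sumr.
    apply: eq_bigr => b _; rewrite !mxE; by rewrite !mulrA.
  rewrite (bigD1 l) //= fG eqxx mulr1 big1 ?addr0 // => i Hi.
  by rewrite fG (negbTE Hi) mulr0.
have [a0 Ha0] := unit_nz ux; have [b0 Hb0] := unit_nz uy.
have [l Hl] : exists l, cc 0 l != 0.
  apply/existsP; apply: contraLR isT => /existsPn Hc.
  have := Hent a0 b0; rewrite big1 => [H|i _].
    by move: (mulf_neq0 Ha0 Hb0); rewrite H eqxx.
  by move: (Hc i); rewrite negbK => /eqP ->; rewrite mul0r.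
have Hrow : forall l', (y j *m col l' G) 0 0 *: x j = cc 0 l' *: e l'.
  move=> l'; apply/rowP => a; rewrite !mxE; move: (Hkey a l'); rewrite !mxE => <-.
  exact: mulrC.
have He_nz : forall l', e l' != 0.
  move=> l'; have [a1 Ha1] := unit_nz (He l'); apply: contraNneq Ha1 => ->.
  by rewrite mxE.
have Hline : forall l', cc 0 l' != 0 -> (e l' :=: x j)%MS.
  move=> l' Hl'.
  have Hd : (y j *m col l' G) 0 0 != 0.
    apply: contraNneq (He_nz l') => Hd0.
    have := Hrow l'; rewrite Hd0 scale0r => /esym/eqP.
    by rewrite scaler_eq0 (negbTE Hl').
  have -> : e l' = (cc 0 l')^-1 *: ((y j *m col l' G) 0 0 *: x j).
    by rewrite Hrow scalerA mulVf // scale1r.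
  by rewrite scalerA; apply: eqmx_scale; rewrite mulf_neq0 // invr_eq0.
have Honly : forall l', l' != l -> cc 0 l' = 0.
  move=> l' Hne; apply/eqP; apply: contraNT (Hdist Hne) => Hc.
  by apply/eqmxP; exact: eqmx_trans (Hline _ Hc) (eqmx_sym (Hline _ Hl)).
have Hs' : s = cc 0 l *: tens (e l) (f l).
  rewrite Hs mulmx_sum_row (bigD1 l) //= big1 ?addr0 => [|i Hi].
    by rewrite rowK.
  by rewrite Honly // scale0r.
have Hn : (cc 0 l)^* * cc 0 l = 1.
  have := unit_tens ux uy; rewrite /unit_vec -vstate1 -/s Hs' vstate_scale vstate1.
  by rewrite (unit_tens (He l) (Hf l)) mulr1.
by exists l => A; rewrite /pstate -/s Hs' vstate_scale Hn mul1r.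
Qed.

Section K.
Variable kf : 'I_k -> 'I_p.
Hypothesis Hk : forall j A, pstate (x j) (y j) A = pstate (e (kf j)) (f (kf j)) A.

Lemma dec_sum i : lambda i = \sum_j mu j * (kf j == i)%:R.
Proof.
have [_ [_ [_ [_ Hw]]]] := D.
by rewrite -(w_Aw i) Hw; apply: eq_bigr => j _; rewrite Hk pst_Aw.
Qed.

Lemma dec_inj : injective kf.
Proof.
move=> j1 j2 E; apply/eqP; apply: contraT => Hne.
have [_ [_ [_ [Hd _]]]] := D.
by exfalso; apply: (Hd _ _ Hne) => A; rewrite !Hk E.
Qed.

Lemma dec_mu j : mu j = lambda (kf j).
Proof.
rewrite dec_sum (bigD1 j) //= eqxx mulr1 big1 ?addr0 // => j' Hj'.
rewrite (_ : (kf j' == kf j) = false) ?mulr0 //; apply/negbTE.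
by apply: contra Hj' => /eqP /dec_inj ->.
Qed.

Lemma dec_ex i : lambda i != 0 -> exists j, kf j = i.
Proof.
move=> Hl; case: (pickP (fun j => kf j == i)) => [j /eqP|H]; first by exists j.
by move: Hl; rewrite dec_sum big1 ?eqxx // => j _; rewrite (H j) mulr0.
Qed.
End K.
End Dec.
End Main.
End H.

Theorem mainTheorem5 (C : numClosedFieldType) (m n p : nat)
  (e : 'I_p -> 'rV[C]_m) (f : 'I_p -> 'rV[C]_n) (lambda : 'I_p -> C) :
  (forall i, unit_vec (e i)) ->
  (forall i, unit_vec (f i)) ->
  (forall i j, i != j -> ~~ (e i == e j)%MS) ->
  row_free (\matrix_(i < p) f i) ->
  (forall i, 0 <= lambda i) ->
  \sum_(i < p) lambda i = 1 ->
  forall (k1 : nat) (mu1 : 'I_k1 -> C) (x1 : 'I_k1 -> 'rV[C]_m)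
         (y1 : 'I_k1 -> 'rV[C]_n)
         (k2 : nat) (mu2 : 'I_k2 -> C) (x2 : 'I_k2 -> 'rV[C]_m)
         (y2 : 'I_k2 -> 'rV[C]_n),
  let w := fun A => \sum_(i < p) lambda i * pstate (e i) (f i) A in
  product_decomposition w mu1 x1 y1 ->
  product_decomposition w mu2 x2 y2 ->
  exists sigma : 'I_k1 -> 'I_k2,
    bijective sigma /\
    forall j, mu2 (sigma j) = mu1 j /\
      (forall A, pstate (x2 (sigma j)) (y2 (sigma j)) A
                 = pstate (x1 j) (y1 j) A).
Proof.
move=> He Hf Hd Hfree _ _ k1 mu1 x1 y1 k2 mu2 x2 y2 w D1 D2.
have [G HG] := row_freeP Hfree.
have [k1f Hk1] := fin_all_exists (range He Hf Hd HG D1).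
have [k2f Hk2] := fin_all_exists (range He Hf Hd HG D2).
have pos1 : forall j, lambda (k1f j) != 0.
  move=> j; rewrite -(dec_mu He HG D1 Hk1); have [Hmu _] := D1; exact: lt0r_neq0.
have pos2 : forall j, lambda (k2f j) != 0.
  move=> j; rewrite -(dec_mu He HG D2 Hk2); have [Hmu _] := D2; exact: lt0r_neq0.
have /fin_all_exists [sigma Hs] : forall j, exists j2, k2f j2 = k1f j.
  move=> j; exact: (dec_ex He HG D2 Hk2 (pos1 j)).
have /fin_all_exists [tau Ht] : forall j, exists j1, k1f j1 = k2f j.
  move=> j; exact: (dec_ex He HG D1 Hk1 (pos2 j)).
exists sigma; split.
  exists tau => j; [apply: (dec_inj D1 Hk1) | apply: (dec_inj D2 Hk2)];
  by rewrite ?Ht ?Hs.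
move=> j; split; first by rewrite (dec_mu He HG D2 Hk2) (dec_mu He HG D1 Hk1) Hs.
by move=> A; rewrite Hk2 Hk1 Hs.
Qed.
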